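(* Let $U$ be a $p$-qubit unitary, $\mathcal{C}$ a quantum code, and $\mathcal{F}$ a family of circuits closed under composition. Then $U$ is $\mathcal{F}$-addressable on $\mathcal{C}$ if and only if $U$ is $\mathcal{F}$-parallel addressable on $\mathcal{C}$.
   Context: Fix logical Pauli operators for the $k$ logical qubits of $\mathcal{C}$, so that each logical operator (unitary preserving the codespace) has a well-defined logical action. $U$ is $\mathcal{F}$-addressable on $\mathcal{C}$ if for every ordered $p$-tuple $t$ of logical qubits there is a circuit in $\mathcal{F}$ that is a logical operator with logical action $\bar U$ on $t$ (and identity on the other logical qubits). $U$ is $\mathcal{F}$-parallel addressable on $\mathcal{C}$ if for every set $I$ of pairwise disjoint ordered $p$-tuples of logical qubits there is a circuit in $\mathcal{F}$ that is a logical operator with logical action $\bar U$ applied to every tuple in $I$ (and identity on the other logical qubits). *)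

(* Defs.v *)
From HB Require Import structures.
From mathcomp Require Import all_boot all_order all_algebra.
Set Implicit Arguments. Unset Strict Implicit. Unset Printing Implicit Defensive.
Import Order.TTheory GRing.Theory Num.Theory.
Local Open Scope ring_scope.

(* Computational basis states of k qubits: bit strings 'I_k -> bool.
   Operators on k qubits are square matrices indexed by 'I_#|basis|,
   the basis state x corresponding to the index enum_rank x. *)
Notation qbasis k := {ffun 'I_k -> bool}.
Notation qdim k := #|{: qbasis k}|.

Definition adjmx (C : numClosedFieldType) m n (A : 'M[C]_(m, n)) : 'M[C]_(n, m) :=
  (map_mx Num.conj A)^T.

Definition qisometry (C : numClosedFieldType) m n (A : 'M[C]_(m, n)) : Prop :=
  adjmx A *m A = 1%:M.

Definition qunitary (C : numClosedFieldType) m (A : 'M[C]_m) : Prop :=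
  adjmx A *m A = 1%:M /\ A *m adjmx A = 1%:M.


(* The k-qubit operator applying the p-qubit operator U to the qubits of the
   tuple t (the a-th tensor factor of U acting on qubit t a), and the identity
   on all other qubits. *)
Definition embed (C : numClosedFieldType) (p k : nat)
    (U : 'M[C]_(qdim p)) (t : {ffun 'I_p -> 'I_k}) : 'M[C]_(qdim k) :=
  \matrix_(i, j)
    let x : qbasis k := enum_val i in
    let y : qbasis k := enum_val j in
    if [forall q, (q \notin codom t) ==> (x q == y q)]
    then U (enum_rank ([ffun a => x (t a)] : qbasis p))
           (enum_rank ([ffun a => y (t a)] : qbasis p))
    else 0.

Definition par_embed (C : numClosedFieldType) (p k : nat)
    (U : 'M[C]_(qdim p)) (I : {set {ffun 'I_p -> 'I_k}}) : 'M[C]_(qdim k) :=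
  \big[@mulmx C _ _ _/1%:M]_(t in I) embed U t.

(* The code C is given by an encoding isometry E from the k logical qubits into
   the n physical qubits; its image is the codespace, and E is the encoding
   fixed by the choice of logical Pauli operators. *)
Definition logical_with_action (C : numClosedFieldType) (n k : nat)
    (E : 'M[C]_(qdim n, qdim k)) (L : 'M[C]_(qdim n)) (V : 'M[C]_(qdim k)) : Prop :=
  qunitary L /\ L *m E = E *m V.

(* Circuits: an abstract type Circ with semantics sem : Circ -> n-qubit matrix;
   a family of circuits is a predicate F on Circ. *)
Definition addressable (C : numClosedFieldType) (n k p : nat)
    (E : 'M[C]_(qdim n, qdim k)) (Circ : Type) (sem : Circ -> 'M[C]_(qdim n))
    (F : Circ -> Prop) (U : 'M[C]_(qdim p)) : Prop :=
  forall t : {ffun 'I_p -> 'I_k}, injective t ->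
    exists c, F c /\ logical_with_action E (sem c) (embed U t).

Definition parallel_addressable (C : numClosedFieldType) (n k p : nat)
    (E : 'M[C]_(qdim n, qdim k)) (Circ : Type) (sem : Circ -> 'M[C]_(qdim n))
    (F : Circ -> Prop) (U : 'M[C]_(qdim p)) : Prop :=
  forall I : {set {ffun 'I_p -> 'I_k}},
    I != set0 ->
    (forall t, t \in I -> injective t) ->
    (forall t1 t2, t1 \in I -> t2 \in I -> t1 != t2 ->
       [disjoint codom t1 & codom t2]) ->
    exists c, F c /\ logical_with_action E (sem c) (par_embed U I).

(* Main.v *)
Require Import Defs.
From mathcomp Require Import all_boot all_order all_algebra.
Import GRing.Theory Num.Theory.
Local Open Scope ring_scope.

Lemma adjmx_mul (C : numClosedFieldType) m n q (A : 'M[C]_(m, n)) (B : 'M[C]_(n, q)) :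
  adjmx (A *m B) = adjmx B *m adjmx A.
Proof. by rewrite /adjmx map_mxM trmx_mul. Qed.

Lemma qunitary_mul (C : numClosedFieldType) m (A B : 'M[C]_m) :
  qunitary A -> qunitary B -> qunitary (A *m B).
Proof.
move=> [A1 A2] [B1 B2]; split; rewrite adjmx_mul.
  by rewrite mulmxA -(mulmxA (adjmx B)) A1 mulmx1 B1.
by rewrite mulmxA -(mulmxA A) B2 mulmx1 A2.
Qed.

Theorem lemma1 (C : numClosedFieldType) (n k p : nat)
    (E : 'M[C]_(qdim n, qdim k)) (hE : qisometry E)
    (U : 'M[C]_(qdim p)) (hU : qunitary U)
    (Circ : Type) (sem : Circ -> 'M[C]_(qdim n))
    (comp : Circ -> Circ -> Circ)
    (hcomp : forall c1 c2, sem (comp c1 c2) = (sem c2 *m sem c1)%R)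
    (F : Circ -> Prop)
    (hF : forall c1 c2, F c1 -> F c2 -> F (comp c1 c2)) :
  addressable E sem F U <-> parallel_addressable E sem F U.
Proof.
split.
- move=> hA I /set0Pn [t0 t0I] hinj _.
  have key : forall r : seq {ffun 'I_p -> 'I_k},
    (exists c, F c /\ logical_with_action E (sem c)
        (\big[@mulmx C _ _ _/1%:M]_(t <- r | t \in I) embed U t))
    \/ (\big[@mulmx C _ _ _/1%:M]_(t <- r | t \in I) embed U t = 1%:M
        /\ ~~ has (fun t => t \in I) r).
    elim=> [|a r IH]; first by right; rewrite big_nil.
    rewrite big_cons /=.
    case: ifP => aI.
      have [c [Fc [Lu Le]]] := hA a (hinj a aI).
      left; case: IH => [[c2 [Fc2 [Lu2 Le2]]]|[-> _]].
        exists (comp c2 c); split; first exact: hF.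
        rewrite hcomp; split; first exact: qunitary_mul.
        by rewrite -mulmxA Le2 mulmxA Le mulmxA.
      by exists c; rewrite mulmx1.
    by case: IH => [?|[-> ->]]; [left|right].
  case: (key (index_enum _)) => [//|[_ /hasPn H]].
  by move: (H t0 (mem_index_enum t0)); rewrite t0I.
- move=> hP t ti.
  have h1 : [set t] != set0 by apply/set0Pn; exists t; rewrite set11.
  have h2 : forall t1, t1 \in [set t] -> injective t1.
    by move=> t1; rewrite in_set1 => /eqP ->.
  have h3 : forall t1 t2, t1 \in [set t] -> t2 \in [set t] -> t1 != t2 ->
      [disjoint codom t1 & codom t2].
    by move=> t1 t2; rewrite !in_set1 => /eqP -> /eqP ->; rewrite eqxx.
  have [c [Fc L]] := hP [set t] h1 h2 h3.
  exists c; split=> //.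
  by move: L; rewrite /par_embed (big_pred1_id _ _ _ (fun x => in_set1 x t)) mulmx1.
Qed.
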